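(* Let $D$ be a division algebra and let $\sigma_1,\sigma_2$ be two commuting automorphisms of $D$. In the skew polynomial ring $T=D[t_1,t_2;\sigma_1,\sigma_2]$, let $I$ be the two-sided ideal generated by $t_1t_2$, and let $S=T/I$. Then $S$ is automorphically normalizable over $D$ if and only if $\sigma_1^{k_1}\circ\sigma_2^{-k_2}$ is an inner automorphism of $D$ for some positive integers $k_1,k_2$.
   Context: All rings are associative with unity. An inner automorphism of $D$ is a map $r\mapsto crc^{-1}$ with $c\in D^\times$. $D[t_1,t_2;\sigma_1,\sigma_2]$ is the skew polynomial ring in two commuting variables with $t_ia=\sigma_i(a)t_i$ for $a\in D$. For a ring $S\supseteq D$, $a\in S$ is automorphic over $D$ with respect to $\tau\in\mathrm{Aut}(D)$ if $ab=\tau(b)a$ for all $b\in D$. Commuting $a_1,\ldots,a_m\in S$ are (left) algebraically independent over $D$ if monomials in them are left linearly independent over $D$. $S$ is automorphically normalizable over $D$ if there exist $m\ge0$ and commuting $a_1,\ldots,a_m\in S$, automorphic over $D$ with respect to pairwise commuting automorphisms, left algebraically independent over $D$, such that $S$ is finitely generated as a left module over the subring $D[a_1,\ldots,a_m]$ generated by $D\cup\{a_1,\ldots,a_m\}$. *)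

(* Defs.v *)
From HB Require Import structures.
From mathcomp Require Import all_boot all_order all_algebra.
Set Implicit Arguments. Unset Strict Implicit. Unset Printing Implicit Defensive.
Import GRing.Theory.
Local Open Scope ring_scope.

Definition is_division_ring (D : unitRingType) : Prop :=
  forall x : D, x != 0 -> x \is a GRing.unit.

Definition is_inner (D : unitRingType) (f : D -> D) : Prop :=
  exists c : D, c \is a GRing.unit /\ forall r : D, f r = c * r * c^-1.

(* T with phi : D -> T and t1, t2 is the skew polynomial ring
   D[t1,t2;s1,s2]: t1, t2 commute, t_i phi(a) = phi(s_i a) t_i, and the
   monomials t1^i t2^j form a basis of T as a left D-module. *)
Definition skew_mono (T : nzRingType) (t1 t2 : T) (p : nat * nat) : T :=
  t1 ^+ p.1 * t2 ^+ p.2.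

Definition is_skew_poly2 (D : unitRingType) (s1 s2 : D -> D) (T : nzRingType)
    (phi : D -> T) (t1 t2 : T) : Prop :=
  [/\ t1 * t2 = t2 * t1,
      (forall a : D, t1 * phi a = phi (s1 a) * t1),
      (forall a : D, t2 * phi a = phi (s2 a) * t2),
      (forall x : T, exists (s : seq (nat * nat)) (c : nat * nat -> D),
          x = \sum_(p <- s) phi (c p) * skew_mono t1 t2 p) &
      (forall (s : seq (nat * nat)) (c : nat * nat -> D), uniq s ->
          \sum_(p <- s) phi (c p) * skew_mono t1 t2 p = 0 ->
          forall p, p \in s -> c p = 0)].

Definition in_ideal2 (T : nzRingType) (g x : T) : Prop :=
  exists l r : seq T, size l = size r /\
    x = \sum_(i < size l) l`_i * g * r`_i.

Definition is_quotient_by (T S : nzRingType) (pi : T -> S) (I : T -> Prop) :=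
  (forall y : S, exists x : T, pi x = y) /\ (forall x : T, pi x = 0 <-> I x).

Inductive gen_subring (D : unitRingType) (S : nzRingType) (psi : D -> S)
    (m : nat) (a : 'I_m -> S) : S -> Prop :=
  | gsD b : gen_subring psi a (psi b)
  | gsA i : gen_subring psi a (a i)
  | gs1 : gen_subring psi a 1
  | gsAdd x y : gen_subring psi a x -> gen_subring psi a y ->
      gen_subring psi a (x + y)
  | gsOpp x : gen_subring psi a x -> gen_subring psi a (- x)
  | gsMul x y : gen_subring psi a x -> gen_subring psi a y ->
      gen_subring psi a (x * y).

Definition automorphic (D : unitRingType) (S : nzRingType) (psi : D -> S)
    (tau : D -> D) (x : S) : Prop :=
  forall b : D, x * psi b = psi (tau b) * x.

Definition left_alg_indep (D : unitRingType) (S : nzRingType) (psi : D -> S)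
    (m : nat) (a : 'I_m -> S) : Prop :=
  forall (s : seq {ffun 'I_m -> nat}) (c : {ffun 'I_m -> nat} -> D), uniq s ->
    \sum_(e <- s) psi (c e) * \prod_(i < m) a i ^+ e i = 0 ->
    forall e, e \in s -> c e = 0.

Definition left_fin_gen_over (D : unitRingType) (S : nzRingType) (psi : D -> S)
    (m : nat) (a : 'I_m -> S) : Prop :=
  exists g : seq S, forall x : S, exists r : 'I_(size g) -> S,
    (forall i, gen_subring psi a (r i)) /\ x = \sum_(i < size g) r i * g`_i.

Definition aut_normalizable (D : unitRingType) (S : nzRingType) (psi : D -> S) :
    Prop :=
  exists (m : nat) (a : 'I_m -> S) (tau : 'I_m -> {rmorphism D -> D}),
    (forall i j, a i * a j = a j * a i) /\
    (forall i, bijective (tau i)) /\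
    (forall i j, forall b, tau i (tau j b) = tau j (tau i b)) /\
    (forall i, automorphic psi (tau i) (a i)) /\
    left_alg_indep psi a /\
    left_fin_gen_over psi a.

(* Main.v *)
Require Import Defs.
From HB Require Import structures.
From mathcomp Require Import all_boot all_order all_algebra.
From mathcomp Require Import zify.
From Stdlib Require Import Classical.
Import GRing.Theory.
Local Open Scope ring_scope.
Set Implicit Arguments. Unset Strict Implicit. Unset Printing Implicit Defensive.

Lemma sum_if_eq (V : zmodType) (I : eqType) (r : seq I) j (x : V) :
  uniq r -> \sum_(i <- r) (if j == i then x else 0) = if j \in r then x else 0.
Proof.
elim: r => [|a r IH] /=; first by rewrite big_nil.
case/andP => ar ur; rewrite big_cons IH // in_cons.
case: (eqVneq j a) => [->|_] /=; last by rewrite add0r.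
by rewrite (negbTE ar) addr0.
Qed.

Fixpoint iterR (D : nzRingType) (f : {rmorphism D -> D}) (n : nat) : {rmorphism D -> D} :=
  match n with 0 => (idfun : {rmorphism D -> D})
  | n'.+1 => ((f : D -> D) \o (iterR f n' : D -> D) : {rmorphism D -> D}) end.
Arguments iterR {D}.
Lemma iterRE (D : nzRingType) (f : {rmorphism D -> D}) n x : iterR f n x = iter n f x.
Proof. elim: n => //= n IH. by rewrite IH. Qed.

Definition box (p : nat * nat) := [seq (i, j) | i <- iota 0 p.1.+1, j <- iota 0 p.2.+1].
Definition subp (p q : nat * nat) := (p.1 - q.1, p.2 - q.2)%N.

Lemma box_uniq p : uniq (box p).
Proof. by apply: allpairs_uniq; rewrite ?iota_uniq // => [[? ?] [? ?]] _ _ /= [-> ->]. Qed.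

Lemma mem_box p q : (q \in box p) = (q.1 <= p.1)%N && (q.2 <= p.2)%N.
Proof.
apply/allpairsP/andP => [[[i j] [hi hj ->]] | [h1 h2]].
  by move: hi hj; rewrite !mem_iota /=; split; lia.
exists q; rewrite !mem_iota; split; [lia | lia | by case: q {h1 h2}].
Qed.

Lemma box_sum (V : zmodType) (a b p : nat * nat) (X : V) :
  \sum_(q <- box p) (if (a == q) && (b == subp p q) then X else 0) =
  if (a.1 + b.1 == p.1)%N && (a.2 + b.2 == p.2)%N then X else 0.
Proof.
case: a b p => [a1 a2] [b1 b2] [p1 p2] /=.
case: ifP => [/andP [/eqP h1 /eqP h2] | h].
  have aB : (a1, a2) \in box (p1, p2) by rewrite mem_box /=; apply/andP; split; lia.
  have E := @sum_if_eq V _ _ (a1, a2) X (box_uniq (p1, p2)); rewrite aB in E; rewrite -E.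
  apply: eq_bigr => q _; case: (eqVneq (a1, a2) q) => //= <-.
  suff -> : (b1, b2) == subp (p1, p2) (a1, a2) by [].
  by rewrite /subp /= xpair_eqE; apply/andP; split; apply/eqP; lia.
rewrite big_seq big1 // => q; rewrite mem_box => /andP [hq1 hq2].
case: (eqVneq (a1, a2) q) => //= eq; subst q; case: (eqVneq (b1, b2) (subp (p1, p2) (a1, a2))) => //=.
rewrite /subp /= => -[e1 e2]; move: h; rewrite e1 e2 /=.
have -> : (a1 + (p1 - a1) == p1)%N && (a2 + (p2 - a2) == p2)%N = true.
  by apply/andP; split; apply/eqP; move: hq1 hq2 => /= *; lia.
done.
Qed.

Lemma iter_cancel (A : Type) (g ginv : A -> A) n : cancel ginv g -> cancel (iter n ginv) (iter n g).
Proof.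
move=> h; elim: n => // n IH r.
by rewrite iterSr iterS h IH.
Qed.

Lemma inner_of (D : unitRingType) (f g ginv : D -> D) (alpha beta : D) (tau : D -> D) :
  alpha \is a GRing.unit -> beta \is a GRing.unit -> cancel ginv g ->
  (forall b, alpha * f b = tau b * alpha) -> (forall b, beta * g b = tau b * beta) ->
  is_inner (fun r => f (ginv r)).
Proof.
move=> ua ub hc ha hb; exists (alpha^-1 * beta); split.
  by rewrite unitrMl // unitrV.
move=> r; set y := ginv r.
have fy : f y = alpha^-1 * (tau y * alpha) by rewrite -ha mulKr.
have ty : tau y = beta * r * beta^-1 by rewrite -(hc r) -/y hb mulrK.
rewrite fy ty invrM ?unitrV // invrK !mulrA.
done.
Qed.

Lemma shift_inner (D : unitRingType) (d beta : D) (tau f : D -> D) :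
  d \is a GRing.unit -> (forall b, d * b = tau b * d) ->
  (forall b, beta * f b = tau b * beta) ->
  forall b, (d^-1 * beta) * f b = (fun x => x) b * (d^-1 * beta).
Proof.
move=> ud hd hb b /=.
have tb : tau b = d * b * d^-1 by rewrite hd mulrK.
by rewrite -mulrA hb tb !mulrA mulVr // mul1r.
Qed.

Lemma prod_two (R : nzRingType) (I : eqType) (r : seq I) (F : I -> R) i l :
  uniq r -> i != l -> F i * F l = F l * F i ->
  (forall k, k != i -> k != l -> F k = 1) ->
  \prod_(k <- r) F k = (if i \in r then F i else 1) * (if l \in r then F l else 1).
Proof.
move=> ur il hc h1; elim: r ur => [|x r IH] /=; first by rewrite big_nil mulr1.
case/andP => xr ur; rewrite big_cons IH // !in_cons.
case: (eqVneq x i) => [exi | xi].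
  subst x; by rewrite (negbTE xr) mul1r /= (eq_sym l i) (negbTE il).
case: (eqVneq x l) => [exl | xl].
  subst x; rewrite (negbTE xr) mulr1.
  by case: (i \in r); rewrite /= ?mul1r ?mulr1.
by rewrite h1 // mul1r /=.
Qed.

Lemma iter_bij (A : Type) (f : A -> A) n : bijective f -> bijective (iter n f).
Proof.
move=> bf; elim: n => [|n IH]; first by exists id.
by apply: (eq_bij (bij_comp bf IH)) => x; rewrite iterS.
Qed.

Section Coef.
Variables (D : unitRingType) (s1 s2 : {rmorphism D -> D}) (T : nzRingType)
  (phi : {rmorphism D -> T}) (t1 t2 : T).
Hypothesis hT : is_skew_poly2 s1 s2 phi t1 t2.

Definition sig (p : nat * nat) (d : D) := iter p.1 s1 (iter p.2 s2 d).
Definition Mt (p : nat * nat) : T := t1 ^+ p.1 * t2 ^+ p.2.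
Definition repT (s : seq (D * (nat * nat))) : T := \sum_(y <- s) phi y.1 * Mt y.2.
Definition cf (s : seq (D * (nat * nat))) p : D := \sum_(y <- s | y.2 == p) y.1.
Definition addp (p q : nat * nat) := (p.1 + q.1, p.2 + q.2)%N.
Definition negl (s : seq (D * (nat * nat))) := [seq (- y.1, y.2) | y <- s].

Lemma t12 : t1 * t2 = t2 * t1. Proof. by case: hT. Qed.

Lemma t1X_phi n a : t1 ^+ n * phi a = phi (iter n s1 a) * t1 ^+ n.
Proof.
elim: n => [|n IH]; first by rewrite expr0 mul1r mulr1.
case: hT => _ h1 _ _ _.
by rewrite exprS -mulrA IH mulrA h1 iterS -mulrA.
Qed.

Lemma t2X_phi n a : t2 ^+ n * phi a = phi (iter n s2 a) * t2 ^+ n.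
Proof.
elim: n => [|n IH]; first by rewrite expr0 mul1r mulr1.
case: hT => _ _ h2 _ _.
by rewrite exprS -mulrA IH mulrA h2 iterS -mulrA.
Qed.

Lemma Mt_phi p a : Mt p * phi a = phi (sig p a) * Mt p.
Proof. by rewrite /Mt -mulrA t2X_phi mulrA t1X_phi -mulrA. Qed.

Lemma t21X i j : t2 ^+ j * t1 ^+ i = t1 ^+ i * t2 ^+ j.
Proof. apply: commrX; apply/esym; apply: commrX; exact: t12. Qed.

Lemma MtM p q : Mt p * Mt q = Mt (addp p q).
Proof.
rewrite /Mt /addp /= !exprD -!mulrA; congr (_ * _).
by rewrite !mulrA t21X.
Qed.

Lemma repT_cat s s' : repT (s ++ s') = repT s + repT s'.
Proof. by rewrite /repT big_cat. Qed.

Lemma repT_negl s : repT (negl s) = - repT s.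
Proof.
rewrite /repT big_map -sumrN; apply: eq_bigr => y _.
by rewrite rmorphN mulNr.
Qed.

Lemma cf_cat s s' p : cf (s ++ s') p = cf s p + cf s' p.
Proof. by rewrite /cf big_cat. Qed.

Lemma cf_negl s p : cf (negl s) p = - cf s p.
Proof. by rewrite /cf big_map -sumrN. Qed.

Lemma span_T x : exists s, x = repT s.
Proof.
case: hT => _ _ _ hs _; have [s [c ->]] := hs x.
exists [seq (c p, p) | p <- s]; by rewrite /repT big_map.
Qed.

Lemma regroup (V : zmodType) (F : D * (nat * nat) -> V) (L : seq (nat * nat)) s :
  uniq L -> (forall y, y \in s -> y.2 \notin L -> F y = 0) ->
  \sum_(y <- s) F y = \sum_(p <- L) \sum_(y <- s | y.2 == p) F y.
Proof.
move=> uL hF.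
under [RHS]eq_bigr do rewrite big_mkcond.
rewrite exchange_big /= [LHS]big_seq [RHS]big_seq; apply: eq_bigr => y ys.
rewrite (sum_if_eq _ _ uL); case: ifP => // /negbT yL.
exact: hF.
Qed.

Lemma GU s : repT s = 0 -> forall p, cf s p = 0.
Proof.
move=> h0 p; case: hT => _ _ _ _ hu.
set L := undup [seq y.2 | y <- s].
have uL : uniq L by exact: undup_uniq.
have H : \sum_(q <- L) phi (cf s q) * skew_mono t1 t2 q = 0.
  rewrite -[RHS]h0 /repT (@regroup _ _ L) //; last first.
    by move=> y ys; rewrite mem_undup (map_f (fun y => y.2) ys).
  apply: eq_bigr => q _; rewrite rmorph_sum mulr_suml.
  by apply: eq_bigr => y /eqP ->.
case pL: (p \in L); first exact: (hu L (cf s) uL H p pL).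
rewrite /cf big_seq_cond big1 // => y /andP [ys /eqP yp].
by move: pL; rewrite mem_undup -yp (map_f (fun y => y.2) ys).
Qed.


Definition mullist (s s' : seq (D * (nat * nat))) :=
  [seq (y.1 * sig y.2 z.1, addp y.2 z.2) | y <- s, z <- s'].

Lemma repT_mul s s' : repT s * repT s' = repT (mullist s s').
Proof.
rewrite /repT /mullist big_allpairs_dep mulr_suml; apply: eq_bigr => y _.
rewrite mulr_sumr; apply: eq_bigr => z _ /=.
by rewrite mulrA -(mulrA (phi y.1)) Mt_phi mulrA -rmorphM -mulrA MtM.
Qed.

Definition posexp (s : seq (D * (nat * nat))) :=
  all (fun y => (0 < y.2.1) && (0 < y.2.2))%N s.

Definition GoodT (x : T) := exists s, x = repT s /\ posexp s.

Lemma ideal_Good x : in_ideal2 (t1 * t2) x -> GoodT x.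
Proof.
case=> l [r [_ ->]].
apply: (big_ind GoodT).
- by exists [::]; rewrite /repT big_nil.
- move=> _ _ [sa [-> pa]] [sb [-> pb]]; exists (sa ++ sb).
  by split; [rewrite repT_cat | rewrite /posexp all_cat; apply/andP; split].
move=> i _.
have [sl ->] := span_T l`_i; have [sr ->] := span_T r`_i.
have -> : t1 * t2 = repT [:: (1 : D, (1%N, 1%N))].
  by rewrite /repT big_cons big_nil addr0 rmorph1 mul1r /Mt /= !expr1.
rewrite !repT_mul; eexists; split; first reflexivity.
apply/allP => w /allpairsP [[p1 p2] [/= hp1 _ ->]].
move/allpairsP: hp1 => [[q1 q2] [/= _ ]]; rewrite inE => /eqP -> -> /=.
rewrite /addp /=; apply/andP; split; lia.
Qed.

Variables (S : nzRingType) (pi : {rmorphism T -> S}).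
Hypothesis hS : is_quotient_by pi (in_ideal2 (t1 * t2)).

Definition axis (p : nat * nat) := (p.1 == 0%N) || (p.2 == 0%N).

Lemma S_span x : exists s, x == pi (repT s).
Proof.
case: hS => hsur _; have [y <-] := hsur x; have [s ->] := span_T y.
by exists s.
Qed.

Lemma S_uniq s : pi (repT s) = 0 -> forall p, axis p -> cf s p = 0.
Proof.
move=> h p ap; case: hS => _ hq.
have [s0 [e0 ps0]] := ideal_Good ((hq _).1 h).
have H : repT (s ++ negl s0) = 0 by rewrite repT_cat repT_negl e0 subrr.
have := GU H p; rewrite cf_cat cf_negl.
suff -> : cf s0 p = 0 by rewrite oppr0 addr0.
rewrite /cf big_seq_cond big1 // => y /andP [ys /eqP yp].
move/allP: ps0 => /(_ y ys); rewrite yp; move: ap; rewrite /axis.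
case: p {yp} => a b /= /orP [] /eqP -> /andP []; lia.
Qed.

Lemma S_eq s s' : pi (repT s) = pi (repT s') -> forall p, axis p -> cf s p = cf s' p.
Proof.
move=> h p ap; apply/eqP; rewrite -subr_eq0 -cf_negl -cf_cat.
apply/eqP/S_uniq => //; by rewrite repT_cat repT_negl rmorphB h subrr.
Qed.

Definition coef (x : S) p := cf (xchoose (S_span x)) p.

Lemma coef_rep s p : axis p -> coef (pi (repT s)) p = cf s p.
Proof.
move=> ap; rewrite /coef; apply: S_eq => //.
by move/eqP: (xchooseP (S_span (pi (repT s)))) => <-.
Qed.

Lemma S_rep x : exists s, x = pi (repT s).
Proof. by have [s /eqP] := S_span x; exists s. Qed.


Definition psi (d : D) : S := pi (phi d).
Definition Mu (p : nat * nat) : S := pi t1 ^+ p.1 * pi t2 ^+ p.2.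

Lemma piMt p : pi (Mt p) = Mu p.
Proof. by rewrite /Mt /Mu rmorphM !rmorphXn. Qed.

Lemma repSE s : pi (repT s) = \sum_(y <- s) psi y.1 * Mu y.2.
Proof. by rewrite /repT rmorph_sum; apply: eq_bigr => y _; rewrite rmorphM piMt. Qed.

Lemma sum_rep (L : seq (nat * nat)) (c : nat * nat -> D) :
  \sum_(q <- L) psi (c q) * Mu q = pi (repT [seq (c q, q) | q <- L]).
Proof. by rewrite repSE big_map. Qed.

Lemma coefD x y p : axis p -> coef (x + y) p = coef x p + coef y p.
Proof.
move=> ap; have [sx ->] := S_rep x; have [sy ->] := S_rep y.
by rewrite -rmorphD -repT_cat !coef_rep // cf_cat.
Qed.

Lemma coefN x p : axis p -> coef (- x) p = - coef x p.
Proof.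
move=> ap; have [sx ->] := S_rep x.
by rewrite -rmorphN -repT_negl !coef_rep // cf_negl.
Qed.

Lemma coef0 p : axis p -> coef 0 p = 0.
Proof.
move=> ap; have -> : (0 : S) = pi (repT [::]) by rewrite /repT big_nil rmorph0.
by rewrite coef_rep // /cf big_nil.
Qed.

Lemma coefB x y p : axis p -> coef (x - y) p = coef x p - coef y p.
Proof. by move=> ap; rewrite coefD // coefN. Qed.

Lemma coef_sum (I : Type) (r : seq I) (F : I -> S) p : axis p ->
  coef (\sum_(i <- r) F i) p = \sum_(i <- r) coef (F i) p.
Proof.
move=> ap; elim: r => [|i r IH]; first by rewrite !big_nil coef0.
by rewrite !big_cons coefD // IH.
Qed.

Lemma coef_lmul d x p : axis p -> coef (psi d * x) p = d * coef x p.
Proof.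
move=> ap; have [sx ->] := S_rep x.
have -> : psi d * pi (repT sx) = pi (repT [seq (d * y.1, y.2) | y <- sx]).
  rewrite /psi -rmorphM /repT big_map mulr_sumr; congr (pi _).
  by apply: eq_bigr => y _; rewrite rmorphM mulrA.
by rewrite !coef_rep // /cf big_map mulr_sumr.
Qed.

Lemma coef_rmul d x p : axis p -> coef (x * psi d) p = coef x p * sig p d.
Proof.
move=> ap; have [sx ->] := S_rep x.
have -> : pi (repT sx) * psi d = pi (repT [seq (y.1 * sig y.2 d, y.2) | y <- sx]).
  rewrite /psi -rmorphM /repT big_map mulr_suml; congr (pi _).
  by apply: eq_bigr => y _; rewrite -mulrA Mt_phi mulrA rmorphM.
rewrite !coef_rep // /cf big_map mulr_suml.
by apply: eq_bigr => y /= /eqP ->.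
Qed.

Lemma coef_term d q p : axis p -> coef (psi d * Mu q) p = if q == p then d else 0.
Proof.
move=> ap; have -> : psi d * Mu q = pi (repT [:: (d, q)]).
  by rewrite repSE big_cons big_nil addr0.
by rewrite coef_rep // /cf big_cons big_nil /=; case: ifP; rewrite ?addr0.
Qed.

Lemma coef_psi d p : axis p -> coef (psi d) p = if (0, 0)%N == p then d else 0.
Proof.
move=> ap; have E : psi d = psi d * Mu (0%N, 0%N).
  by rewrite /Mu /= !expr0 !mulr1.
rewrite E.
exact: coef_term.
Qed.

Lemma piuv : pi t1 * pi t2 = 0.
Proof.
case: hS => _ hq; rewrite -rmorphM; apply/hq.
exists [:: 1], [:: 1]; split => //.
by rewrite big_ord1 /= mul1r mulr1.
Qed.

Lemma Mu_mixed q : (0 < q.1)%N -> (0 < q.2)%N -> Mu q = 0.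
Proof.
case: q => [[|i] [|j]] //= _ _.
by rewrite /Mu /= exprSr exprS mulrA -(mulrA _ (pi t1)) piuv mulr0 mul0r.
Qed.

Lemma CF x : exists L : seq (nat * nat), [/\ uniq L, all axis L &
  x = \sum_(p <- L) psi (coef x p) * Mu p].
Proof.
have [s ->] := S_rep x.
set L := undup [seq y.2 | y <- s & axis y.2].
exists L; split; first exact: undup_uniq.
  by apply/allP => p; rewrite mem_undup => /mapP [y]; rewrite mem_filter => /andP [? _] ->.
rewrite [LHS]repSE (@regroup _ _ L) ?undup_uniq //; last first.
  move=> y ys; rewrite mem_undup; case ay: (axis y.2).
    by rewrite (map_f (fun y => y.2)) // mem_filter ay.
  move=> _; move/negbT: ay; rewrite /axis negb_or => /andP [h1 h2]; by rewrite Mu_mixed ?mulr0 // lt0n.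
rewrite big_seq [RHS]big_seq; apply: eq_bigr => p pL.
have ap : axis p.
  by move: pL; rewrite mem_undup => /mapP [y]; rewrite mem_filter => /andP [? _] ->.
rewrite coef_rep // /cf /psi !rmorph_sum mulr_suml; apply: eq_bigr => y /eqP ->.
done.
Qed.

Lemma coef_ext x y : (forall p, axis p -> coef x p = coef y p) -> x = y.
Proof.
move=> h; apply/eqP; rewrite -subr_eq0; apply/eqP.
have [L [_ aL ->]] := CF (x - y).
rewrite big_seq big1 // => p pL.
by rewrite coefB ?h ?subrr ?(allP aL) // /psi !rmorph0 mul0r.
Qed.

Lemma coef_fin x : exists N, forall p, axis p -> (N <= p.1 + p.2)%N -> coef x p = 0.
Proof.
have [L [uL aL ex]] := CF x.
exists (\sum_(q <- L) (q.1 + q.2)).+1 => p ap hN.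
rewrite ex sum_rep coef_rep // /cf big_map big_seq_cond big1 // => q /andP [qL /eqP qp].
have : (q.1 + q.2 <= \sum_(q <- L) (q.1 + q.2))%N.
  by rewrite (bigD1_seq q) //= leq_addr.
move: hN; rewrite -qp; move: (\sum_(q <- L) (q.1 + q.2))%N => M /=; lia.
Qed.


Lemma sigE p d : sig p d = iterR s1 p.1 (iterR s2 p.2 d).
Proof. by rewrite !iterRE. Qed.

Lemma sig_sum (I : Type) (r : seq I) (P : pred I) (F : I -> D) p :
  sig p (\sum_(i <- r | P i) F i) = \sum_(i <- r | P i) sig p (F i).
Proof. by rewrite sigE !rmorph_sum; apply: eq_bigr => i _; rewrite sigE. Qed.

Lemma cf_mul s s' p :
  cf (mullist s s') p = \sum_(q <- box p) cf s q * sig q (cf s' (subp p q)).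
Proof.
symmetry.
transitivity (\sum_(q <- box p) \sum_(y <- s) \sum_(z <- s')
   (if (y.2 == q) && (z.2 == subp p q) then y.1 * sig y.2 z.1 else 0)).
  apply: eq_bigr => q _; rewrite /cf sig_sum mulr_suml big_mkcond.
  apply: eq_bigr => y _ /=; case: (eqVneq y.2 q) => [<-|_] /=; last first.
    by rewrite big1.
  rewrite mulr_sumr big_mkcond; apply: eq_bigr => z _ /=.
  by case: ifP.
rewrite exchange_big /cf /mullist [RHS]big_mkcond [RHS]big_allpairs_dep /=.
apply: eq_bigr => y _; rewrite exchange_big; apply: eq_bigr => z _ /=.
rewrite box_sum; case: p => p1 p2; by rewrite /addp xpair_eqE.
Qed.

Lemma box_axis p q : axis p -> q \in box p -> axis q /\ axis (subp p q).
Proof.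
rewrite /axis mem_box /subp /=; case: p q => [a b] [c d] /=.
case/orP => /eqP -> /andP [h1 h2]; split; apply/orP; [left|left|right|right]; lia.
Qed.

Lemma coef_mul x y p : axis p ->
  coef (x * y) p = \sum_(q <- box p) coef x q * sig q (coef y (subp p q)).
Proof.
move=> ap; have [sx ->] := S_rep x; have [sy ->] := S_rep y.
rewrite -rmorphM repT_mul coef_rep // cf_mul big_seq [RHS]big_seq.
apply: eq_bigr => q qb; have [aq aq'] := box_axis ap qb.
by rewrite !coef_rep.
Qed.


Definition vfree x := forall j, (0 < j)%N -> coef x (0%N, j) = 0.
Definition ufree x := forall i, (0 < i)%N -> coef x (i, 0%N) = 0.

Lemma axis_v j : axis (0%N, j). Proof. by []. Qed.
Lemma axis_u i : axis (i, 0%N). Proof. by rewrite /axis orbT. Qed.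

Lemma box_v j : box (0%N, j) = [seq (0%N, k) | k <- iota 0 j.+1].
Proof. by rewrite /box /= cats0. Qed.

Lemma box_u i : box (i, 0%N) = [seq (k, 0%N) | k <- iota 0 i.+1].
Proof. by rewrite /box /=; congr (_ :: _); elim: (iota 1 i) => //= k r ->. Qed.

Lemma sig0 q : sig q 0 = 0.
Proof. by rewrite sigE !rmorph0. Qed.

Lemma coef_mul_v x y j : vfree x ->
  coef (x * y) (0%N, j) = coef x (0%N, 0%N) * coef y (0%N, j).
Proof.
move=> hx; rewrite coef_mul // box_v /= big_cons big1_seq ?addr0.
  by rewrite /subp /= !subn0.
move=> w /mapP [k]; rewrite mem_iota => /andP [hk _] -> /=.
by rewrite hx ?mul0r.
Qed.

Lemma coef_mul_u x y i : ufree x ->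
  coef (x * y) (i, 0%N) = coef x (0%N, 0%N) * coef y (i, 0%N).
Proof.
move=> hx; rewrite coef_mul ?axis_u // box_u /= big_cons big1_seq ?addr0.
  by rewrite /subp /= !subn0.
move=> w /mapP [k]; rewrite mem_iota => /andP [hk _] -> /=.
by rewrite hx ?mul0r.
Qed.

Lemma coef_mul_u0 x y i : (forall m, coef y (m, 0%N) = 0) -> coef (x * y) (i, 0%N) = 0.
Proof.
move=> hy; rewrite coef_mul ?axis_u // big1_seq // => q _.
by rewrite /subp /= hy sig0 mulr0.
Qed.

Lemma coef_mul_v0 x y j : (forall m, coef y (0%N, m) = 0) -> coef (x * y) (0%N, j) = 0.
Proof.
move=> hy; rewrite coef_mul // big1_seq // => q _.
by rewrite /subp /= hy sig0 mulr0.
Qed.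

Lemma axis_cases (P : nat * nat -> Prop) :
  (forall j, P (0%N, j)) -> (forall i, (0 < i)%N -> P (i, 0%N)) -> forall p, axis p -> P p.
Proof.
move=> h1 h2 [[|i] j] /=; first by move=> _; apply: h1.
by rewrite /axis /= => /eqP ->; apply: h2.
Qed.

Lemma mul_vu x y : vfree x -> ufree y -> coef y (0%N, 0%N) = 0 ->
  x * y = psi (coef x (0%N, 0%N)) * y.
Proof.
move=> hx hy h0; apply: coef_ext; apply: axis_cases => [j | i hi].
  by rewrite coef_mul_v // coef_lmul.
rewrite coef_lmul ?axis_u // hy // mulr0 coef_mul_u0 // => -[|m] //.
exact: hy.
Qed.

Lemma mul_uv x y : ufree x -> vfree y -> coef y (0%N, 0%N) = 0 ->
  x * y = psi (coef x (0%N, 0%N)) * y.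
Proof.
move=> hx hy h0; apply: coef_ext; apply: axis_cases => [j | i hi]; last first.
  by rewrite coef_mul_u // coef_lmul ?axis_u.
rewrite coef_lmul //; case: j => [|j]; first by rewrite h0 coef_mul_v0 ?mulr0 // => -[|m] //; exact: hy.
by rewrite hy // mulr0 coef_mul_v0 // => -[|m] //; exact: hy.
Qed.

Lemma psi1 : psi 1 = 1.
Proof. by rewrite /psi !rmorph1. Qed.

Lemma gen_vfree m (a : 'I_m -> S) : (forall i, vfree (a i)) ->
  forall r, gen_subring psi a r -> vfree r.
Proof.
move=> ha r; elim => {r}.
- by move=> b j hj; rewrite coef_psi //; case: j hj.
- exact: ha.
- by move=> j hj; rewrite -psi1 coef_psi //; case: j hj.
- by move=> x y _ hx _ hy j hj; rewrite coefD // hx // hy // addr0.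
- by move=> x _ hx j hj; rewrite coefN // hx // oppr0.
- by move=> x y hx' hx _ hy j hj; rewrite coef_mul_v // hy // mulr0.
Qed.

Lemma gen_ufree m (a : 'I_m -> S) : (forall i, ufree (a i)) ->
  forall r, gen_subring psi a r -> ufree r.
Proof.
move=> ha r; elim => {r}.
- by move=> b j hj; rewrite coef_psi ?axis_u //; case: j hj.
- exact: ha.
- by move=> j hj; rewrite -psi1 coef_psi ?axis_u //; case: j hj.
- by move=> x y _ hx _ hy j hj; rewrite coefD ?axis_u // hx // hy // addr0.
- by move=> x _ hx j hj; rewrite coefN ?axis_u // hx // oppr0.
- by move=> x y hx' hx _ hy j hj; rewrite coef_mul_u // hy // mulr0.
Qed.

Lemma seq_bound (g : seq S) : exists N, forall y, y \in g -> forall p, axis p ->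
  (N <= p.1 + p.2)%N -> coef y p = 0.
Proof.
elim: g => [|y g [N hN]]; first by exists 0%N.
have [Ny hy] := coef_fin y.
exists (maxn N Ny) => z; rewrite inE => /orP [/eqP -> | zg] p ap hp.
  by apply: hy => //; move: hp; lia.
by apply: hN => //; move: hp; lia.
Qed.

Lemma Mu_v j : psi 1 * Mu (0%N, j) = pi t2 ^+ j.
Proof. by rewrite psi1 mul1r /Mu /= expr0 mul1r. Qed.

Lemma Mu_u i : psi 1 * Mu (i, 0%N) = pi t1 ^+ i.
Proof. by rewrite psi1 mul1r /Mu /= expr0 mulr1. Qed.

Lemma claimA_v m (a : 'I_m -> S) : left_fin_gen_over psi a ->
  exists i j, (0 < j)%N /\ coef (a i) (0%N, j) != 0.
Proof.
move=> [g hg]; apply: NNPP => hne.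
have ha : forall i, vfree (a i).
  move=> i j hj; case: (eqVneq (coef (a i) (0%N, j)) 0) => // ne.
  by exfalso; apply: hne; exists i, j.
have [N hN] := seq_bound g.
have [r [hr ex]] := hg (psi 1 * Mu (0%N, N.+1)).
have := congr1 (fun z => coef z (0%N, N.+1)) ex.
rewrite coef_term // eqxx coef_sum // big1 => [|i _].
  by move/eqP; rewrite oner_eq0.
rewrite coef_mul_v; last exact: (gen_vfree ha (hr i)).
by rewrite (hN g`_i (mem_nth 0 (ltn_ord i))) ?mulr0.
Qed.

Lemma claimA_u m (a : 'I_m -> S) : left_fin_gen_over psi a ->
  exists i j, (0 < j)%N /\ coef (a i) (j, 0%N) != 0.
Proof.
move=> [g hg]; apply: NNPP => hne.
have ha : forall i, ufree (a i).
  move=> i j hj; case: (eqVneq (coef (a i) (j, 0%N)) 0) => // ne.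
  by exfalso; apply: hne; exists i, j.
have [N hN] := seq_bound g.
have [r [hr ex]] := hg (psi 1 * Mu (N.+1, 0%N)).
have := congr1 (fun z => coef z (N.+1, 0%N)) ex.
rewrite coef_term ?axis_u // eqxx coef_sum ?axis_u // big1 => [|i _].
  by move/eqP; rewrite oner_eq0.
rewrite coef_mul_u; last exact: (gen_ufree ha (hr i)).
by rewrite (hN g`_i (mem_nth 0 (ltn_ord i))) ?mulr0 ?axis_u //= addn0.
Qed.


Lemma aut_coef tau x p b : automorphic psi tau x -> axis p ->
  coef x p * sig p b = tau b * coef x p.
Proof.
move=> h ap; have := congr1 (fun z => coef z p) (h b).
by rewrite coef_rmul // coef_lmul.
Qed.

Lemma indep_contra m (a : 'I_m -> S) (i l : 'I_m) d : i != l -> a i * a l = a l * a i ->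
  left_alg_indep psi a -> a i * a l = psi d * a l -> False.
Proof.
move=> il hc hind e.
pose e2 : {ffun 'I_m -> nat} := [ffun k => ((k == i) + (k == l))%N].
pose e1 : {ffun 'I_m -> nat} := [ffun k => nat_of_bool (k == l)].
have ne : e2 != e1.
  apply/eqP => /ffunP /(_ i); rewrite !ffunE eqxx (negbTE il) /=.
  by [].
have P2 : \prod_(k < m) a k ^+ e2 k = a i * a l.
  rewrite (@prod_two _ _ _ _ i l) ?index_enum_uniq ?mem_index_enum //;
    rewrite /e2 ?ffunE ?eqxx ?(negbTE il) ?(eq_sym l i) ?(negbTE il) /= ?expr1 //.
  by move=> k ki kl; rewrite ffunE (negbTE ki) (negbTE kl) expr0.
have P1 : \prod_(k < m) a k ^+ e1 k = a l.
  rewrite (@prod_two _ _ _ _ i l) ?index_enum_uniq ?mem_index_enum //;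
    rewrite /e1 ?ffunE ?eqxx ?(negbTE il) /= ?expr0 ?expr1 ?mul1r ?mulr1 //.
  by move=> k ki kl; rewrite ffunE (negbTE kl) expr0.
have U : uniq [:: e2; e1] by rewrite /= inE ne.
have Z : \sum_(e <- [:: e2; e1]) psi (if e == e2 then 1 else - d) * \prod_(k < m) a k ^+ e k = 0.
  rewrite big_cons big_cons big_nil eqxx (negbTE (_ : e1 != e2)); last by rewrite eq_sym.
  by rewrite P2 P1 psi1 mul1r /psi !rmorphN mulNr e addr0 subrr.
have := hind _ _ U Z e2 (mem_head _ _).
by rewrite eqxx => /eqP; rewrite oner_eq0.
Qed.

Lemma fwd (hD : is_division_ring D) (s2inv : D -> D) (hs2' : cancel s2inv s2) :
  aut_normalizable psi -> exists k1 k2 : nat, (0 < k1)%N /\ (0 < k2)%N /\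
    is_inner (fun r : D => iter k1 s1 (iter k2 s2inv r)).
Proof.
case=> m [a [tau [hcomm [hbij [htc [haut [hind hfg]]]]]]].
have [i [j [hj bne]]] := claimA_v hfg.
have [l [k [hk ane]]] := claimA_u hfg.
have unit_of : forall x : D, x != 0 -> x \is a GRing.unit by [].
have hc := iter_cancel j hs2'.
have Hb := fun b => aut_coef b (haut i) (axis_v j).
case: (classic (exists k', (0 < k')%N /\ coef (a i) (k', 0%N) != 0)).
  move=> [k' [hk' ne']]; exists k', j; do 2 split => //.
  exact: (inner_of (hD _ ne') (hD _ bne) hc (fun b => aut_coef b (haut i) (axis_u k')) Hb).
move=> nui.
have Ha := fun b => aut_coef b (haut l) (axis_u k).
case: (classic (exists j', (0 < j')%N /\ coef (a l) (0%N, j') != 0)).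
  move=> [j' [hj' ne']]; exists k, j'; do 2 split => //.
  exact: (inner_of (hD _ ane) (hD _ ne') (iter_cancel j' hs2') Ha
     (fun b => aut_coef b (haut l) (axis_v j'))).
move=> nvl.
have ui : ufree (a i).
  move=> x hx; case: (eqVneq (coef (a i) (x, 0%N)) 0) => // h.
  by exfalso; apply: nui; exists x.
have vl : vfree (a l).
  move=> x hx; case: (eqVneq (coef (a l) (0%N, x)) 0) => // h.
  by exfalso; apply: nvl; exists x.
have il : i != l.
  by apply/eqP => eil; move: ane; rewrite -eil ui ?eqxx.
case: (eqVneq (coef (a l) (0%N, 0%N)) 0) => d'0.
  exfalso; apply: (indep_contra il (hcomm i l) hind); exact: mul_uv.
case: (eqVneq (coef (a i) (0%N, 0%N)) 0) => d0.
  exfalso; apply: (indep_contra (_ : l != i) (hcomm l i) hind); first by rewrite eq_sym.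
  exact: mul_vu.
exists k, j; do 2 split => //.
have Hd := fun b => aut_coef b (haut i) (axis_v 0).
have Hd' := fun b => aut_coef b (haut l) (axis_v 0).
apply: (inner_of _ _ hc (shift_inner (hD _ d'0) Hd' Ha) (shift_inner (hD _ d0) Hd Hb)).
  by rewrite unitrMl ?unitrV ?hD.
by rewrite unitrMl ?unitrV ?hD.
Qed.


Section Bwd.
Variables (k1 k2 : nat) (c : D).
Hypotheses (hk1 : (0 < k1)%N) (hk2 : (0 < k2)%N) (uc : c \is a GRing.unit).
Hypothesis hca : forall b, c * iter k2 s2 b = iter k1 s1 b * c.

Local Notation u := (pi t1).
Local Notation v := (pi t2).

Lemma uX_psi n b : u ^+ n * psi b = psi (iter n s1 b) * u ^+ n.
Proof. by rewrite /psi -rmorphXn -!rmorphM t1X_phi. Qed.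

Lemma vX_psi n b : v ^+ n * psi b = psi (iter n s2 b) * v ^+ n.
Proof. by rewrite /psi -rmorphXn -!rmorphM t2X_phi. Qed.

Lemma uv0 i j : (0 < i)%N -> (0 < j)%N -> u ^+ i * v ^+ j = 0.
Proof. by move=> hi hj; have := Mu_mixed (q := (i, j)) hi hj. Qed.

Lemma vu0 i j : (0 < i)%N -> (0 < j)%N -> v ^+ j * u ^+ i = 0.
Proof. by move=> hi hj; rewrite -!rmorphXn -rmorphM t21X rmorphM !rmorphXn uv0. Qed.

Definition aa := u ^+ k1 + psi c * v ^+ k2.

Lemma psiM x y : psi (x * y) = psi x * psi y.
Proof. by rewrite /psi !rmorphM. Qed.

Lemma aa_aut b : aa * psi b = psi (iter k1 s1 b) * aa.
Proof.
rewrite /aa mulrDl mulrDr uX_psi -mulrA vX_psi mulrA -psiM hca psiM.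
by rewrite -mulrA.
Qed.

Lemma iter_unit n x : x \is a GRing.unit -> iter n s1 x \is a GRing.unit.
Proof. by move=> ux; rewrite -iterRE rmorph_unit. Qed.

Lemma aa_comm q d : d \is a GRing.unit ->
  exists d', d' \is a GRing.unit /\ aa ^+ q * psi d = psi d' * aa ^+ q.
Proof.
elim: q d => [|q IH] d ud; first by exists d; rewrite expr0 mul1r mulr1.
have [d' [ud' e]] := IH _ (iter_unit k1 ud).
exists d'; split => //.
by rewrite exprSr -mulrA aa_aut mulrA e -mulrA.
Qed.

Lemma apow_u q r : (0 < r)%N -> aa ^+ q * u ^+ r = u ^+ (k1 * q + r).
Proof.
elim: q r => [|q IH] r hr; first by rewrite expr0 mul1r muln0.
rewrite exprSr -mulrA /aa mulrDl -exprD -mulrA vu0 // mulr0 addr0 IH; last lia.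
by rewrite mulnS addnA (addnC k1) -addnA.
Qed.

Lemma apow_v q r : (0 < r)%N -> exists C, C \is a GRing.unit /\
  aa ^+ q * v ^+ r = psi C * v ^+ (k2 * q + r).
Proof.
elim: q r => [|q IH] r hr; first by exists 1; rewrite unitr1 expr0 mul1r muln0 psi1 mul1r.
rewrite exprSr -mulrA /aa mulrDl uv0 // add0r -mulrA -exprD.
have [d' [ud' e]] := aa_comm q uc.
have [C [uC eC]] := IH (k2 + r)%N (ltn_addl _ hr).
exists (d' * C); split; first by rewrite unitrMl.
by rewrite mulrA e -mulrA eC mulrA -psiM mulnS addnA (addnC k2).
Qed.

Lemma apow_S q : exists C, aa ^+ q.+1 = u ^+ (k1 * q.+1) + psi C * v ^+ (k2 * q.+1).
Proof.
have [d' [_ e]] := aa_comm q uc.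
have [C [_ eC]] := apow_v q hk2.
exists (d' * C).
rewrite exprSr {2}/aa mulrDr apow_u // mulrA e -mulrA eC mulrA -psiM.
by rewrite !mulnS (addnC k1) (addnC k2).
Qed.

Lemma coef_apow n n' : coef (aa ^+ n') (k1 * n, 0%N) = if n' == n then 1 else 0.
Proof.
case: n' => [|q].
  rewrite expr0 -psi1 coef_psi ?axis_u // xpair_eqE eqxx andbT eq_sym muln_eq0.
  by rewrite (negbTE (lt0n_neq0 hk1)) eq_sym.
have [C ->] := apow_S q.
have -> : psi C * v ^+ (k2 * q.+1) = psi C * Mu (0%N, (k2 * q.+1)%N).
  by rewrite /Mu /= expr0 mul1r.
rewrite coefD ?axis_u // -Mu_u !coef_term ?axis_u // !xpair_eqE eqxx andbT.
rewrite eqn_pmul2l //.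
have -> : (k2 * q.+1 == 0)%N = false by rewrite muln_eq0 (negbTE (lt0n_neq0 hk2)).
rewrite andbF.
by rewrite addr0.
Qed.

Lemma aa_indep : left_alg_indep psi (fun _ : 'I_1 => aa).
Proof.
move=> s cc us hs e0 he0.
have := congr1 (fun z => coef z (k1 * e0 ord0, 0%N)) hs.
rewrite coef_sum ?axis_u // coef0 ?axis_u //.
under eq_bigr => e _ do rewrite big_ord1 coef_lmul ?axis_u // coef_apow.
have -> : \sum_(e <- s) cc e * (if e ord0 == e0 ord0 then 1 else 0) =
          \sum_(e <- s) (if e0 == e then cc e0 else 0).
  apply: eq_bigr => e _.
  have -> : (e ord0 == e0 ord0) = (e0 == e).
    apply/eqP/eqP => [h | -> //]; apply/ffunP => i; by rewrite (ord1 i) h.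
  by case: eqP => [-> | _]; rewrite ?mulr1 ?mulr0.
by rewrite sum_if_eq // he0.
Qed.


Definition a0 := fun _ : 'I_1 => aa.

Definition gg : seq S :=
  [seq u ^+ r.+1 | r <- iota 0 k1] ++ [seq v ^+ r.+1 | r <- iota 0 k2] ++ [:: 1].

Definition spanned x := exists r : 'I_(size gg) -> S,
  (forall i, gen_subring psi a0 (r i)) /\ x = \sum_i r i * gg`_i.

Lemma gs0 : gen_subring psi a0 0.
Proof. by have := gsD psi a0 0; rewrite /psi !rmorph0. Qed.

Lemma span0 : spanned 0.
Proof. by exists (fun _ => 0); split => [i|]; [exact: gs0 | rewrite big1 // => i _; rewrite mul0r]. Qed.

Lemma spanD x y : spanned x -> spanned y -> spanned (x + y).
Proof.
move=> [r [hr ->]] [r' [hr' ->]]; exists (fun i => r i + r' i); split.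
  by move=> i; apply: gsAdd.
by rewrite -big_split; apply: eq_bigr => i _; rewrite mulrDl.
Qed.

Lemma span_mem w y : gen_subring psi a0 w -> y \in gg -> spanned (w * y).
Proof.
move=> hw yg; have hi : (index y gg < size gg)%N by rewrite index_mem.
exists (fun i => if i == Ordinal hi then w else 0); split.
  by move=> i; case: ifP => _ //; exact: gs0.
rewrite (bigD1 (Ordinal hi)) //= eqxx nth_index // big1 ?addr0 // => i /negbTE ->.
by rewrite mul0r.
Qed.

Lemma gen_pow d q : gen_subring psi a0 (psi d * aa ^+ q).
Proof.
apply: gsMul; first exact: gsD.
elim: q => [|q IH]; first by rewrite expr0; exact: gs1.
by rewrite exprS; apply: gsMul => //; exact: (gsA psi a0 ord0).
Qed.

Lemma span_term d p : spanned (psi d * Mu p).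
Proof.
case: p => [[|i] [|j]].
- have -> : psi d * Mu (0%N, 0%N) = (psi d * aa ^+ 0) * 1 by rewrite /Mu /= !expr0 !mulr1.
  apply: span_mem; first exact: gen_pow.
  by rewrite !mem_cat mem_head !orbT.
- rewrite /Mu /= expr0 mul1r.
  set n := j.+1; have hn : n = (k2 * (j %/ k2) + (j %% k2).+1)%N.
    by rewrite /n addnS mulnC -divn_eq.
  have [C [uC eC]] := apow_v (j %/ k2) (ltn0Sn (j %% k2)).
  rewrite hn -[d](divrK uC) psiM -mulrA -eC mulrA.
  apply: span_mem; first exact: gen_pow.
  rewrite !mem_cat; apply/orP; right; apply/orP; left.
  by apply: map_f; rewrite mem_iota /= ltn_pmod.
- rewrite /Mu /= expr0 mulr1.
  set n := i.+1; have hn : n = (k1 * (i %/ k1) + (i %% k1).+1)%N.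
    by rewrite /n addnS mulnC -divn_eq.
  rewrite hn -apow_u // mulrA.
  apply: span_mem; first exact: gen_pow.
  rewrite !mem_cat; apply/orP; left.
  by apply: map_f; rewrite mem_iota /= ltn_pmod.
- by rewrite Mu_mixed // mulr0; exact: span0.
Qed.

Lemma span_all x : spanned x.
Proof.
have [s ->] := S_rep x; rewrite repSE.
apply: (big_ind spanned); [exact: span0 | exact: spanD | move=> y _; exact: span_term].
Qed.

End Bwd.

Lemma bwd (hs1 : bijective s1) (s2inv : D -> D) (hs2 : cancel s2 s2inv) :
  (exists k1 k2 : nat, (0 < k1)%N /\ (0 < k2)%N /\
    is_inner (fun r : D => iter k1 s1 (iter k2 s2inv r))) -> aut_normalizable psi.
Proof.
move=> [k1 [k2 [hk1 [hk2 [c [uc hc]]]]]].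
have hca : forall b, c * iter k2 s2 b = iter k1 s1 b * c.
  by move=> b; have := hc (iter k2 s2 b); rewrite (iter_cancel k2 hs2) => ->; rewrite divrK.
exists 1%N, (a0 k1 k2 c), (fun _ => iterR s1 k1).
split; first by [].
split; first by move=> i; apply: (eq_bij (iter_bij k1 hs1)) => x; rewrite iterRE.
split; first by [].
split; first by move=> i b; rewrite iterRE; exact: aa_aut.
split; first exact: aa_indep.
exists (gg k1 k2); move=> x; exact: span_all.
Qed.

End Coef.

Unset Implicit Arguments.
Set Strict Implicit.

Theorem lemma5p10 (D : unitRingType) (hD : is_division_ring D)
    (s1 s2 : {rmorphism D -> D}) (s2inv : D -> D)
    (hs1 : bijective s1) (hs2 : cancel s2 s2inv) (hs2' : cancel s2inv s2)
    (hcomm : forall a : D, s1 (s2 a) = s2 (s1 a))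
    (T : nzRingType) (phi : {rmorphism D -> T}) (t1 t2 : T)
    (hT : is_skew_poly2 s1 s2 phi t1 t2)
    (S : nzRingType) (pi : {rmorphism T -> S})
    (hS : is_quotient_by pi (in_ideal2 (t1 * t2))) :
  aut_normalizable (fun b : D => pi (phi b)) <->
  exists k1 k2 : nat, (0 < k1)%N /\ (0 < k2)%N /\
    is_inner (fun r : D => iter k1 s1 (iter k2 s2inv r)).
Proof.
split.
  exact: (fwd hT hS hD hs2').
exact: (bwd hT hS hs1 hs2).
Qed.
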